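(* Let $X$ be a finite set and let $c$ be a choice correspondence on $X$ satisfying: (Condition 1) for all $x,y\in X$ and menus $A\subset B$, if $x,y\in A$, $x\in c(A)$ and $y\in c(B)$, then $x\in c(B)$; and (Condition 3) for every menu $A$ with at least two elements there exists $x\in A$ with $x\notin c(A)$. Then $c$ satisfies No Binary Cycles: for all $x,y,z\in X$, if $x\in c(\{x,y\})$ and $y\in c(\{y,z\})$, then $x\in c(\{x,z\})$.
   Context: A menu is a nonempty subset of $X$. A choice correspondence is a map $c$ assigning to each menu $A$ a nonempty subset $c(A)\subseteq A$. *)

(* Defs.v *)
From mathcomp Require Import all_boot.
Set Implicit Arguments. Unset Strict Implicit. Unset Printing Implicit Defensive.

(* A menu is a nonempty subset of X; a choice correspondence assigns to each
   menu A a nonempty subset c A of A.  Values of c on set0 are irrelevant. *)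
Definition choice_correspondence (X : finType) (c : {set X} -> {set X}) : Prop :=
  forall A : {set X}, A != set0 -> c A \subset A /\ c A != set0.

Definition condition1 (X : finType) (c : {set X} -> {set X}) : Prop :=
  forall (x y : X) (A B : {set X}), A != set0 -> A \subset B ->
    x \in A -> y \in A -> x \in c A -> y \in c B -> x \in c B.

Definition condition3 (X : finType) (c : {set X} -> {set X}) : Prop :=
  forall A : {set X}, 2 <= #|A| -> exists2 x, x \in A & x \notin c A.

Definition no_binary_cycles (X : finType) (c : {set X} -> {set X}) : Prop :=
  forall x y z : X, x \in c [set x; y] -> y \in c [set y; z] -> x \in c [set x; z].

(* Main.v *)
Require Import Defs.
From mathcomp Require Import all_boot.

Theorem lemma4 (X : finType) (c : {set X} -> {set X}) :
  choice_correspondence c -> condition1 c -> condition3 c -> no_binary_cycles c.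
Proof.
move=> Hc H1 H3 x y z Hxy Hyz.
have ne2 : forall a b : X, [set a; b] != set0.
  by move=> a b; apply/set0Pn; exists a; rewrite !inE eqxx.
have sub2 : forall a b, c [set a; b] \subset [set a; b] by move=> a b; case: (Hc _ (ne2 a b)).
have nz2 : forall a b, c [set a; b] != set0 by move=> a b; case: (Hc _ (ne2 a b)).
have [exz|nxz] := eqVneq x z.
  subst z; rewrite setUid.
  case/set0Pn: (nz2 x x) => w Hw.
  have := subsetP (sub2 x x) w Hw; rewrite setUid inE => /eqP Ew; subst w.
  by rewrite setUid in Hw.
have [exy|nxy] := eqVneq x y; first by subst y.
have [eyz|nyz] := eqVneq y z; first by subst z.
apply/negPn/negP => Hnx.
have Hz : z \in c [set x; z].
  case/set0Pn: (nz2 x z) => w Hw.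
  have := subsetP (sub2 x z) w Hw; rewrite !inE => /orP[/eqP Ew|/eqP Ew].
    by subst w; rewrite Hw in Hnx.
  by subst w.
set B := [set x; y; z].
have sB : forall a b, a \in B -> b \in B -> [set a; b] \subset B.
  move=> a0 b0 Ha Hb; apply/subsetP => w; rewrite in_set2 => /orP[/eqP->|/eqP->] //.
have inB : [/\ x \in B, y \in B & z \in B] by rewrite !inE !eqxx /= ?orbT.
case: inB => xB yB zB.
have in1 : forall a b : X, a \in [set a; b] by move=> a b; rewrite !inE eqxx.
have in2 : forall a b : X, b \in [set a; b] by move=> a b; rewrite !inE eqxx orbT.
have yx : y \in c B -> x \in c B.
  by move=> Hy; apply: (H1 x y [set x; y] B (ne2 x y) (sB _ _ xB yB) (in1 _ _) (in2 _ _) Hxy Hy).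
have zy : z \in c B -> y \in c B.
  by move=> Hy; apply: (H1 y z [set y; z] B (ne2 y z) (sB _ _ yB zB) (in1 _ _) (in2 _ _) Hyz Hy).
have xz : x \in c B -> z \in c B.
  move=> Hy; apply: (H1 z x [set x; z] B (ne2 x z) (sB _ _ xB zB) (in2 _ _) (in1 _ _) Hz Hy).
have neB : B != set0 by apply/set0Pn; exists x.
case: (Hc B neB) => subB /set0Pn [w Hw].
have allin : [/\ x \in c B, y \in c B & z \in c B].
  have := subsetP subB w Hw; rewrite !inE => /orP[/orP[/eqP E|/eqP E]|/eqP E]; subst w;
  [have hx := Hw | have hx := yx Hw | have hx := yx (zy Hw)];
  by split; [exact: hx | exact: zy (xz hx) | exact: xz hx].
case: allin => cx cy cz.
have card2 : 2 <= #|B|.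
  have : [set x; y] \subset B by apply: sB.
  move/subset_leq_card; apply: leq_trans.
  by rewrite cards2 nxy.
case: (H3 B card2) => v wB; case/negP.
by move: wB; rewrite !inE => /orP[/orP[/eqP->|/eqP->]|/eqP->].
Qed.
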